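(* Let $A\in\mathbb{R}^{n\times n}$ be Metzler and $J\in\mathbb{R}^{n\times n}$ be nonnegative. The following statements are equivalent: (a) There exists $\lambda\in\mathbb{R}^n_{>0}$ such that $\lambda^\top A<0$ and $\lambda^\top (J-I_n)<0$. (b) $\ker\begin{bmatrix} I_n & -A & -(J-I_n)\end{bmatrix}\cap\mathbb{R}^{3n}_{\ge0}=\{0\}$. Moreover, if one of these statements holds, then the impulsive system is asymptotically stable under arbitrary dwell-time, i.e. for every impulse sequence with $T_k\in(0,\infty)$ for all $k$.
   Context: Consider the linear impulsive system $\dot x(t)=Ax(t)$ for $t\neq t_k$, $x(t_k^+)=Jx(t_k)$, $x(t_0)=x_0$, where $x(t)\in\mathbb{R}^n$, $x(t^+):=\lim_{s\downarrow t}x(s)$ (trajectories are left-continuous), and the impulse times $\{t_k\}_{k\in\mathbb{N}}$ form a strictly increasing sequence with $t_k\to\infty$. The dwell-times are $T_k:=t_{k+1}-t_k$. A square matrix is Metzler if all its off-diagonal entries are nonnegative, and nonnegative if all its entries are nonnegative. Vector inequalities are componentwise; $\mathbb{R}^n_{>0}$ ($\mathbb{R}^n_{\ge0}$) denotes vectors with positive (nonnegative) entries. The system is asymptotically stable under a given dwell-time constraint if its zero solution is globally asymptotically stable for every impulse sequence whose dwell-times satisfy the constraint. *)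

(* Defs.v *)
(* real analysis (derivatives, limits) is needed for the
   impulsive system, so vectors/matrices are represented as functions
   on indices, with only indices < n meaningful. *)
From Stdlib Require Import Reals Lra Lia.
Open Scope R_scope.

Fixpoint vsum (n : nat) (f : nat -> R) : R :=
  match n with
  | O => 0
  | S m => vsum m f + f m
  end.

Definition vec := nat -> R.
Definition mat := nat -> nat -> R.

Definition idm : mat := fun i j => if Nat.eqb i j then 1 else 0.

Definition mulmv (n : nat) (M : mat) (v : vec) : vec :=
  fun i => vsum n (fun j => M i j * v j).

Definition mulvm (n : nat) (l : vec) (M : mat) : vec :=
  fun j => vsum n (fun i => l i * M i j).

Definition metzler (n : nat) (A : mat) : Prop :=
  forall i j, (i < n)%nat -> (j < n)%nat -> i <> j -> 0 <= A i j.

Definition nonneg_mat (n : nat) (J : mat) : Prop :=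
  forall i j, (i < n)%nat -> (j < n)%nat -> 0 <= J i j.

Definition JmI (J : mat) : mat := fun i j => J i j - idm i j.

Definition cond_a (n : nat) (A J : mat) : Prop :=
  exists l : vec,
    (forall i, (i < n)%nat -> 0 < l i) /\
    (forall j, (j < n)%nat -> mulvm n l A j < 0) /\
    (forall j, (j < n)%nat -> mulvm n l (JmI J) j < 0).

(* (b) ker [I, -A, -(J-I)] /\ R^{3n}_{>=0} = {0}:
   a vector (x;y;z) in R^{3n} is in the kernel iff x - A y - (J-I) z = 0 *)
Definition cond_b (n : nat) (A J : mat) : Prop :=
  forall x y z : vec,
    (forall i, (i < n)%nat -> 0 <= x i /\ 0 <= y i /\ 0 <= z i) ->
    (forall i, (i < n)%nat ->
        x i - mulmv n A y i - mulmv n (JmI J) z i = 0) ->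
    forall i, (i < n)%nat -> x i = 0 /\ y i = 0 /\ z i = 0.

(* admissible impulse sequence (arbitrary dwell-time): strictly increasing,
   diverging to +infinity; t 0 is the initial time t_0 *)
Definition impulse_seq (t : nat -> R) : Prop :=
  (forall k, t k < t (S k)) /\
  (forall M : R, exists k, M < t k).

(* x : R -> vec is a solution on [t 0, oo) of
     xdot = A x  (t <> t_k),   x(t_k^+) = J x(t_k),   x(t_0) = x0,
   with left-continuous trajectories. *)
Definition is_solution (n : nat) (A J : mat) (t : nat -> R) (x0 : vec)
    (x : R -> vec) : Prop :=
  (forall i, (i < n)%nat -> x (t 0%nat) i = x0 i) /\
  (forall k s i, (i < n)%nat -> t k < s < t (S k) ->
     derivable_pt_lim (fun r => x r i) s (mulmv n A (x s) i)) /\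
  (forall k i, (i < n)%nat -> forall eps, 0 < eps -> exists d, 0 < d /\
     forall s, t (S k) - d < s < t (S k) ->
       Rabs (x s i - x (t (S k)) i) < eps) /\
  (forall k i, (i < n)%nat -> forall eps, 0 < eps -> exists d, 0 < d /\
     forall s, t k < s < t k + d ->
       Rabs (x s i - mulmv n J (x (t k)) i) < eps).

(* global asymptotic stability of the zero solution for the impulse
   sequence t (infinity-norm on R^n) *)
Definition GAS (n : nat) (A J : mat) (t : nat -> R) : Prop :=
  (forall eps, 0 < eps -> exists delta, 0 < delta /\
     forall (x0 : vec) (x : R -> vec),
       (forall i, (i < n)%nat -> Rabs (x0 i) < delta) ->
       is_solution n A J t x0 x ->
       forall s, t 0%nat <= s -> forall i, (i < n)%nat -> Rabs (x s i) < eps) /\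
  (forall (x0 : vec) (x : R -> vec), is_solution n A J t x0 x ->
     forall i, (i < n)%nat -> forall eps, 0 < eps -> exists T,
       forall s, T <= s -> Rabs (x s i) < eps).

Definition AS_arbitrary_dwell (n : nat) (A J : mat) : Prop :=
  forall t : nat -> R, impulse_seq t -> GAS n A J t.

(* Main.v *)
Require Import Defs.
From Stdlib Require Import Reals Lra Lia List.
Open Scope R_scope.

Lemma vsum_ext m f g : (forall i, (i < m)%nat -> f i = g i) -> vsum m f = vsum m g.
Proof. induction m; simpl; intros H; auto. rewrite IHm by (intros; apply H; lia). rewrite (H m) by lia. auto. Qed.

Lemma vsum_lin m a b f g : vsum m (fun i => a * f i + b * g i) = a * vsum m f + b * vsum m g.
Proof. induction m; simpl; [ring|]. rewrite IHm. ring. Qed.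

Lemma vsum_plus m f g : vsum m (fun i => f i + g i) = vsum m f + vsum m g.
Proof. induction m; simpl; [ring|]. rewrite IHm. ring. Qed.

Lemma vsum_scal m a f : vsum m (fun i => a * f i) = a * vsum m f.
Proof. induction m; simpl; [ring|]. rewrite IHm. ring. Qed.

Lemma vsum_zero m : vsum m (fun _ => 0) = 0.
Proof. induction m; simpl; [ring|]. rewrite IHm. ring. Qed.

Lemma vsum_le m f g : (forall i, (i < m)%nat -> f i <= g i) -> vsum m f <= vsum m g.
Proof. induction m; simpl; intros H; [lra|]. assert (f m <= g m) by (apply H; lia).
  assert (vsum m f <= vsum m g) by (apply IHm; intros; apply H; lia). lra. Qed.

Lemma vsum_nonneg m f : (forall i, (i < m)%nat -> 0 <= f i) -> 0 <= vsum m f.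
Proof. intros H. rewrite <- (vsum_zero m). apply vsum_le. auto. Qed.

Lemma vsum_delta m k v : (k < m)%nat -> vsum m (fun j => if Nat.eqb j k then v else 0) = v.
Proof. induction m; intros Hk; [lia|]. simpl. destruct (Nat.eqb m k) eqn:E.
  - apply Nat.eqb_eq in E. subst. rewrite (vsum_ext _ _ (fun _ => 0)). rewrite vsum_zero; ring.
    intros i Hi. destruct (Nat.eqb i k) eqn:E2; auto. apply Nat.eqb_eq in E2; lia.
  - apply Nat.eqb_neq in E. rewrite IHm by lia. ring. Qed.

Lemma vsum_swap m p (F : nat -> nat -> R) :
  vsum m (fun i => vsum p (fun j => F i j)) = vsum p (fun j => vsum m (fun i => F i j)).
Proof. induction m; simpl. - rewrite vsum_zero; auto.
  - rewrite IHm. rewrite <- vsum_plus. auto. Qed.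

Lemma vsum_term m f k : (k < m)%nat -> (forall i, (i < m)%nat -> 0 <= f i) -> f k <= vsum m f.
Proof. induction m; intros Hk H; [lia|]. simpl. destruct (Nat.eq_dec k m).
  - subst. assert (0 <= vsum m f) by (apply vsum_nonneg; intros; apply H; lia). lra.
  - assert (f k <= vsum m f) by (apply IHm; [lia| intros; apply H; lia]).
    assert (0 <= f m) by (apply H; lia). lra. Qed.

Lemma vsum_abs m f : Rabs (vsum m f) <= vsum m (fun i => Rabs (f i)).
Proof. induction m; simpl. - rewrite Rabs_R0; lra.
  - eapply Rle_trans; [apply Rabs_triang|]. lra. Qed.

Lemma vsum_add a b f : vsum (a + b) f = vsum a f + vsum b (fun j => f (a + j)%nat).
Proof. induction b; simpl. - rewrite Nat.add_0_r; ring.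
  - rewrite Nat.add_succ_r. simpl. rewrite IHb. ring. Qed.

Definition dot (m : nat) (l a : vec) : R := vsum m (fun i => l i * a i).
Definition lsum (c : list (R * vec)) (i : nat) : R :=
  fold_right (fun e acc => fst e * snd e i + acc) 0 c.
Definition combo (m : nat) (L : list vec) (c : list (R * vec)) : Prop :=
  (forall e, In e c -> 0 <= fst e /\ In (snd e) L) /\
  (exists e, In e c /\ 0 < fst e) /\
  (forall i, (i < m)%nat -> lsum c i = 0).

Lemma below_exists (lb : list R) : exists t, forall b, In b lb -> t < b.
Proof. induction lb as [|b lb [t Ht]]. - exists 0; simpl; tauto.
  - exists (Rmin t (b - 1)). intros b' [<-|H].
    + pose proof (Rmin_r t (b-1)); lra. + pose proof (Rmin_l t (b-1)); specialize (Ht _ H); lra. Qed.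

Lemma between_exists a (lb : list R) : (forall b, In b lb -> a < b) ->
  exists t, a < t /\ forall b, In b lb -> t < b.
Proof. induction lb as [|b lb IH]; intros H. - exists (a+1); simpl; split; [lra|tauto].
  - destruct IH as [t [Ht1 Ht2]]. intros; apply H; simpl; auto.
    assert (a < b) by (apply H; simpl; auto).
    exists (Rmin t ((a+b)/2)). split.
    + apply Rmin_case; lra.
    + intros b' [Eb|Hb]. * subst b'. pose proof (Rmin_r t ((a+b)/2)); lra.
      * pose proof (Rmin_l t ((a+b)/2)); specialize (Ht2 _ Hb); lra. Qed.

Lemma sep_exists (la lb : list R) : (forall a b, In a la -> In b lb -> a < b) ->
  exists t, (forall a, In a la -> a < t) /\ (forall b, In b lb -> t < b).
Proof. induction la as [|a la IH]; intros H.
  - destruct (below_exists lb) as [t Ht]. exists t; simpl; split; tauto.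
  - destruct IH as [t [Ht1 Ht2]]. intros; apply H; simpl; auto.
    destruct (Rlt_dec a t).
    + exists t. split; auto. intros a' [<-|Ha]; auto.
    + destruct (between_exists a lb) as [t' [Ht'1 Ht'2]]. intros; apply H; simpl; auto.
      exists t'. split; auto. intros a' [<-|Ha]; auto. specialize (Ht1 _ Ha). lra. Qed.

Definition cls (m : nat) (a : vec) : nat :=
  match total_order_T 0 (a m) with
  | inleft (left _) => 1%nat | inleft (right _) => 0%nat | inright _ => 2%nat end.

Lemma cls_spec m a : (cls m a = 1%nat /\ 0 < a m) \/ (cls m a = 0%nat /\ a m = 0) \/ (cls m a = 2%nat /\ a m < 0).
Proof. unfold cls. destruct (total_order_T 0 (a m)) as [[H|H]|H]; auto. Qed.

Definition comb (m : nat) (p q : vec) : vec := fun i => (- q m) * p i + p m * q i.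

Section Step.
Variable m : nat.
Variable L : list vec.
Definition Pl := filter (fun a => Nat.eqb (cls m a) 1) L.
Definition Zl := filter (fun a => Nat.eqb (cls m a) 0) L.
Definition Nl := filter (fun a => Nat.eqb (cls m a) 2) L.
Definition L' := Zl ++ flat_map (fun p => map (fun q => comb m p q) Nl) Pl.

Lemma inP a : In a Pl <-> In a L /\ 0 < a m.
Proof. unfold Pl. rewrite filter_In. destruct (cls_spec m a) as [[E H]|[[E H]|[E H]]]; rewrite E; simpl;
  split; intros; try tauto; try lra; split; tauto. Qed.
Lemma inZ a : In a Zl <-> In a L /\ a m = 0.
Proof. unfold Zl. rewrite filter_In. destruct (cls_spec m a) as [[E H]|[[E H]|[E H]]]; rewrite E; simpl;
  split; intros; try tauto; try lra; split; tauto. Qed.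
Lemma inN a : In a Nl <-> In a L /\ a m < 0.
Proof. unfold Nl. rewrite filter_In. destruct (cls_spec m a) as [[E H]|[[E H]|[E H]]]; rewrite E; simpl;
  split; intros; try tauto; try lra; split; tauto. Qed.

Lemma inL' b : In b L' <-> In b Zl \/ exists p q, In p Pl /\ In q Nl /\ b = comb m p q.
Proof. unfold L'. rewrite in_app_iff, in_flat_map. split.
  - intros [H|[p [Hp Hb]]]; auto. right. apply in_map_iff in Hb. destruct Hb as [q [<- Hq]]. eauto.
  - intros [H|[p [q [Hp [Hq ->]]]]]; auto. right. exists p; split; auto. apply in_map_iff; eauto. Qed.

Lemma L'_m b : In b L' -> b m = 0.
Proof. rewrite inL'. intros [H|[p [q [_ [_ ->]]]]]. - apply inZ in H; tauto. - unfold comb; ring. Qed.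

Lemma transfer c' : (forall e, In e c' -> 0 <= fst e /\ In (snd e) L') ->
  exists c, (forall e, In e c -> 0 <= fst e /\ In (snd e) L) /\
    ((exists e, In e c' /\ 0 < fst e) -> exists e, In e c /\ 0 < fst e) /\
    (forall i, lsum c i = lsum c' i).
Proof. induction c' as [|[w b] c' IH]; intros H.
  - exists nil. simpl. split; [tauto|split]; [intros [e [[] _]]|auto].
  - destruct IH as [c [Hc1 [Hc2 Hc3]]]. intros e He; apply H; simpl; auto.
    destruct (H (w,b)) as [Hw Hb]; simpl; auto. simpl in Hw, Hb. apply inL' in Hb.
    destruct Hb as [Hb|[p [q [Hp [Hq ->]]]]].
    + exists ((w,b)::c). split; [|split].
      * intros e [<-|He]; auto. simpl. apply inZ in Hb; tauto.
      * intros [e [[Ee|He1] He2]].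
        -- exists (w,b); simpl; split; auto. subst e. auto.
        -- destruct Hc2 as [e' [? ?]]. eauto. exists e'; simpl; auto.
      * intros i; simpl. rewrite Hc3. auto.
    + apply inP in Hp. apply inN in Hq.
      exists ((w * - q m, p) :: (w * p m, q) :: c). split; [|split].
      * intros e [<-|[<-|He]]; simpl; auto.
        -- split; [|tauto]. apply Rmult_le_pos; lra.
        -- split; [|tauto]. apply Rmult_le_pos; lra.
      * intros [e [[<-|He1] He2]]; simpl in *.
        -- exists (w * - q m, p); simpl; split; auto. apply Rmult_lt_0_compat; lra.
        -- destruct Hc2 as [e' [? ?]]. eauto. exists e'; simpl; auto.
      * intros i; simpl. rewrite Hc3. unfold comb. ring.
Qed.
End Step.

Lemma div_lt a b u v : 0 < u -> 0 < v -> a * v < b * u -> a / u < b / v.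
Proof. intros Hu Hv H.
  replace (a / u) with ((a * v) * / (u * v)) by (field; lra).
  replace (b / v) with ((b * u) * / (u * v)) by (field; lra).
  apply Rmult_lt_compat_r; auto. apply Rinv_0_lt_compat, Rmult_lt_0_compat; auto. Qed.

Lemma gordan m : forall L, (forall c, ~ combo m L c) ->
  exists l : vec, forall a, In a L -> 0 < dot m l a.
Proof. induction m as [|m IH]; intros L H.
  - destruct L as [|a L]. + exists (fun _ => 0); simpl; tauto.
    + exfalso. apply (H ((1,a)::nil)). split; [|split].
      * intros e [<-|[]]; simpl; split; [lra|auto].
      * exists (1,a); simpl; split; auto; lra.
      * intros i Hi; lia.
  - destruct (IH (L' m L)) as [mu Hmu].
    { intros c' Hc'. destruct Hc' as [Hc1 [Hc2 Hc3]].
      destruct (transfer m L c' Hc1) as [c [Hd1 [Hd2 Hd3]]].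
      apply (H c). split; [auto|split; [auto|]].
      intros i Hi. rewrite Hd3. destruct (Nat.eq_dec i m).
      - subst. clear -Hc1. induction c' as [|[w b] c' IHc]; simpl; auto.
        rewrite IHc. destruct (Hc1 (w,b)) as [_ Hb]; simpl; auto.
        simpl in Hb. rewrite (L'_m _ _ _ Hb). ring. intros; apply Hc1; simpl; auto.
      - apply Hc3; lia. }
    set (al := fun p : vec => - dot m mu p / p m).
    set (be := fun q : vec => dot m mu q / (- q m)).
    destruct (sep_exists (map al (Pl m L)) (map be (Nl m L))) as [t [Ht1 Ht2]].
    { intros a b Ha Hb. apply in_map_iff in Ha, Hb. destruct Ha as [p [<- Hp]]. destruct Hb as [q [<- Hq]].
      assert (Hc : 0 < dot m mu (comb m p q)). { apply Hmu. apply inL'. right; eauto. }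
      unfold comb, dot in Hc. rewrite vsum_ext with (g := fun i => (- q m) * (mu i * p i) + p m * (mu i * q i)) in Hc
        by (intros; ring). rewrite vsum_lin in Hc. fold (dot m mu p) (dot m mu q) in Hc.
      apply inP in Hp. apply inN in Hq. unfold al, be. apply div_lt; try lra. }
    exists (fun i => if Nat.eqb i m then t else mu i).
    assert (Hd : forall a, dot (S m) (fun i => if Nat.eqb i m then t else mu i) a = dot m mu a + t * a m).
    { intros a. unfold dot. simpl. rewrite Nat.eqb_refl. f_equal. apply vsum_ext. intros i Hi.
      destruct (Nat.eqb i m) eqn:E; auto. apply Nat.eqb_eq in E; lia. }
    intros a Ha. rewrite Hd. destruct (cls_spec m a) as [[E Hm]|[[E Hm]|[E Hm]]].
    + assert (HP : In a (Pl m L)) by (apply inP; auto).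
      specialize (Ht1 (al a) (in_map al _ _ HP)). unfold al in Ht1.
      assert (- dot m mu a < t * a m).
      { replace (- dot m mu a) with ((- dot m mu a / a m) * a m) by (field; lra).
        apply Rmult_lt_compat_r; auto. } lra.
    + rewrite Hm, Rmult_0_r, Rplus_0_r. apply Hmu. apply inL'. left. apply inZ; auto.
    + assert (HN : In a (Nl m L)) by (apply inN; auto).
      specialize (Ht2 (be a) (in_map be _ _ HN)). unfold be in Ht2.
      assert (t * (- a m) < dot m mu a).
      { replace (dot m mu a) with ((dot m mu a / - a m) * (- a m)) by (field; lra).
        apply Rmult_lt_compat_r; lra. } lra.
Qed.

Lemma vsum_idm m f k : (k < m)%nat -> vsum m (fun i => f i * idm i k) = f k.
Proof. intros Hk. rewrite (vsum_ext _ _ (fun i => if Nat.eqb i k then f k else 0)).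
  apply vsum_delta; auto. intros i _. unfold idm. destruct (Nat.eqb i k) eqn:E.
  apply Nat.eqb_eq in E; subst; ring. ring. Qed.

Lemma vsum_idm' m f k : (k < m)%nat -> vsum m (fun i => idm k i * f i) = f k.
Proof. intros Hk. rewrite (vsum_ext _ _ (fun i => if Nat.eqb i k then f k else 0)).
  apply vsum_delta; auto. intros i _. unfold idm. rewrite Nat.eqb_sym. destruct (Nat.eqb i k) eqn:E.
  apply Nat.eqb_eq in E; subst; ring. ring. Qed.

Lemma dual m l M v : vsum m (fun i => l i * mulmv m M v i) = vsum m (fun j => mulvm m l M j * v j).
Proof. unfold mulmv, mulvm. rewrite (vsum_ext m _ (fun i => vsum m (fun j => l i * M i j * v j))).
  rewrite vsum_swap. apply vsum_ext. intros j _. rewrite Rmult_comm, <- vsum_scal. apply vsum_ext; intros; ring.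
  intros i _. rewrite <- vsum_scal. apply vsum_ext; intros; ring. Qed.

Lemma vsum_zero_each m f : (forall i, (i < m)%nat -> 0 <= f i) -> vsum m f = 0 ->
  forall i, (i < m)%nat -> f i = 0.
Proof. intros H0 H i Hi. pose proof (vsum_term m f i Hi H0). pose proof (H0 i Hi). lra. Qed.

Lemma Rmult_le_pos_neg_neg a b : a <= 0 -> b <= 0 -> 0 <= a * b.
Proof. intros; nra. Qed.

Lemma a_to_b n A J : cond_a n A J -> cond_b n A J.
Proof. intros [l [Hl [HA HJ]]] x y z Hn Hk.
  set (f := fun i => l i * x i + mulvm n l A i * (- y i) + mulvm n l (JmI J) i * (- z i)).
  assert (Hf0 : forall i, (i < n)%nat -> 0 <= f i).
  { intros i Hi. unfold f. destruct (Hn i Hi) as [? [? ?]]. specialize (Hl i Hi). specialize (HA i Hi).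
    specialize (HJ i Hi). assert (0 <= l i * x i) by (apply Rmult_le_pos; lra).
    assert (0 <= mulvm n l A i * - y i) by (apply Rmult_le_pos_neg_neg; lra).
    assert (0 <= mulvm n l (JmI J) i * - z i) by (apply Rmult_le_pos_neg_neg; lra). lra. }
  assert (Hs : vsum n f = 0).
  { assert (E1 : vsum n f = vsum n (fun i => l i * x i) + (-1) * vsum n (fun j => mulvm n l A j * y j)
        + (-1) * vsum n (fun j => mulvm n l (JmI J) j * z j)).
    { rewrite <- !vsum_scal, <- !vsum_plus. apply vsum_ext; intros; unfold f; ring. }
    rewrite E1, <- !dual. rewrite <- !vsum_scal, <- !vsum_plus.
    rewrite <- (vsum_zero n). apply vsum_ext. intros i Hi.
    transitivity (l i * (x i - mulmv n A y i - mulmv n (JmI J) z i)). ring. rewrite Hk; auto; ring. }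
  intros i Hi. pose proof (vsum_zero_each n f Hf0 Hs i Hi) as Hfi. unfold f in Hfi.
  destruct (Hn i Hi) as [? [? ?]]. specialize (Hl i Hi). specialize (HA i Hi). specialize (HJ i Hi).
  assert (0 <= l i * x i) by (apply Rmult_le_pos; lra).
  assert (0 <= mulvm n l A i * - y i) by (apply Rmult_le_pos_neg_neg; lra).
  assert (0 <= mulvm n l (JmI J) i * - z i) by (apply Rmult_le_pos_neg_neg; lra).
  assert (E1 : l i * x i = 0) by lra. assert (E2 : mulvm n l A i * - y i = 0) by lra.
  assert (E3 : mulvm n l (JmI J) i * - z i = 0) by lra.
  apply Rmult_integral in E1, E2, E3. repeat split; lra. Qed.

Definition colI (k : nat) : vec := fun i => idm i k.
Definition colA (A : mat) (k : nat) : vec := fun i => - A i k.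
Definition colJ (J : mat) (k : nat) : vec := fun i => - JmI J i k.
Definition cols n A J := map colI (seq 0 n) ++ map (colA A) (seq 0 n) ++ map (colJ J) (seq 0 n).

Definition addk (v : vec) k w : vec := fun j => v j + (if Nat.eqb j k then w else 0).

Lemma mulmv_addk n M v k w i : (k < n)%nat -> mulmv n M (addk v k w) i = mulmv n M v i + M i k * w.
Proof. intros Hk. unfold mulmv, addk.
  rewrite (vsum_ext _ _ (fun j => M i j * v j + (if Nat.eqb j k then M i k * w else 0))).
  rewrite vsum_plus, vsum_delta; auto.
  intros j _. destruct (Nat.eqb j k) eqn:E; [apply Nat.eqb_eq in E; subst|]; ring. Qed.

Lemma combo_to_xyz n A J c : (forall e, In e c -> 0 <= fst e /\ In (snd e) (cols n A J)) ->
  exists x y z : vec, (forall i, 0 <= x i /\ 0 <= y i /\ 0 <= z i) /\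
   (forall i, (i < n)%nat -> lsum c i = x i - mulmv n A y i - mulmv n (JmI J) z i) /\
   ((exists e, In e c /\ 0 < fst e) -> exists i, (i < n)%nat /\ (0 < x i \/ 0 < y i \/ 0 < z i)).
Proof. induction c as [|[w a] c IH]; intros H.
  - exists (fun _ => 0), (fun _ => 0), (fun _ => 0). split; [intros; lra|split].
    + intros i Hi; simpl. unfold mulmv. rewrite (vsum_ext n (fun j => A i j * 0) (fun _ => 0)) by (intros; ring).
      rewrite (vsum_ext n (fun j => JmI J i j * 0) (fun _ => 0)) by (intros; ring). rewrite vsum_zero; ring.
    + intros [e [[] _]].
  - destruct IH as [x [y [z [H1 [H2 H3]]]]]. intros; apply H; simpl; auto.
    destruct (H (w,a)) as [Hw Ha]; simpl; auto. simpl in Hw, Ha.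
    unfold cols in Ha. rewrite !in_app_iff, !in_map_iff in Ha.
    assert (Hpos : (exists e, In e ((w,a)::c) /\ 0 < fst e) -> 0 < w \/ exists e, In e c /\ 0 < fst e).
    { intros [e [[<-|He] He2]]; simpl in *; eauto. }
    destruct Ha as [[k [<- Hk]]|[[k [<- Hk]]|[k [<- Hk]]]]; apply in_seq in Hk.
    + exists (addk x k w), y, z. split; [|split].
      * intros i; unfold addk; destruct (H1 i) as [? [? ?]]; destruct (Nat.eqb i k); lra.
      * intros i Hi. simpl. rewrite H2 by auto. unfold addk, colI, idm. rewrite Nat.eqb_sym.
        destruct (Nat.eqb k i); ring.
      * intros Hp. destruct (Hpos Hp) as [Hw'|Hp']. exists k. split; [lia|left]. unfold addk.
        rewrite Nat.eqb_refl. pose proof (H1 k); lra.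
        destruct (H3 Hp') as [i [Hi Hi']]. exists i; split; auto. unfold addk. pose proof (H1 i).
        destruct (Nat.eqb i k); lra.
    + exists x, (addk y k w), z. split; [|split].
      * intros i; unfold addk; destruct (H1 i) as [? [? ?]]; destruct (Nat.eqb i k); lra.
      * intros i Hi. simpl. rewrite H2 by auto. rewrite mulmv_addk by lia. unfold colA. ring.
      * intros Hp. destruct (Hpos Hp) as [Hw'|Hp']. exists k. split; [lia|right;left]. unfold addk.
        rewrite Nat.eqb_refl. pose proof (H1 k); lra.
        destruct (H3 Hp') as [i [Hi Hi']]. exists i; split; auto. unfold addk. pose proof (H1 i).
        destruct (Nat.eqb i k); lra.
    + exists x, y, (addk z k w). split; [|split].
      * intros i; unfold addk; destruct (H1 i) as [? [? ?]]; destruct (Nat.eqb i k); lra.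
      * intros i Hi. simpl. rewrite H2 by auto. rewrite mulmv_addk by lia. unfold colJ. ring.
      * intros Hp. destruct (Hpos Hp) as [Hw'|Hp']. exists k. split; [lia|right;right]. unfold addk.
        rewrite Nat.eqb_refl. pose proof (H1 k); lra.
        destruct (H3 Hp') as [i [Hi Hi']]. exists i; split; auto. unfold addk. pose proof (H1 i).
        destruct (Nat.eqb i k); lra.
Qed.

Lemma b_to_a n A J : cond_b n A J -> cond_a n A J.
Proof. intros Hb. destruct (gordan n (cols n A J)) as [l Hl].
  - intros c [Hc1 [Hc2 Hc3]]. destruct (combo_to_xyz n A J c Hc1) as [x [y [z [H1 [H2 H3]]]]].
    destruct (H3 Hc2) as [i [Hi Hp]].
    assert (Hz := Hb x y z (fun i _ => H1 i)). specialize (Hz (fun i Hi => eq_trans (eq_sym (H2 i Hi)) (Hc3 i Hi)) i Hi).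
    lra.
  - exists l. split; [|split].
    + intros j Hj. assert (HI : In (colI j) (cols n A J)) by (unfold cols; apply in_or_app; left; apply (in_map colI), in_seq; lia).
      specialize (Hl _ HI). unfold dot, colI in Hl. rewrite vsum_idm in Hl by auto.
      apply Hl.
    + intros j Hj. assert (HI : In (colA A j) (cols n A J)) by (unfold cols; apply in_or_app; right; apply in_or_app; left; apply (in_map (colA A)), in_seq; lia).
      specialize (Hl _ HI). unfold dot, colA in Hl.
      rewrite (vsum_ext _ _ (fun i => (-1) * (l i * A i j))) in Hl by (intros; ring). rewrite vsum_scal in Hl.
      unfold mulvm. cut (0 < -1 * vsum n (fun i => l i * A i j)). lra.
      apply Hl.
    + intros j Hj. assert (HI : In (colJ J j) (cols n A J)) by (unfold cols; apply in_or_app; right; apply in_or_app; right; apply (in_map (colJ J)), in_seq; lia).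
      specialize (Hl _ HI). unfold dot, colJ in Hl.
      rewrite (vsum_ext _ _ (fun i => (-1) * (l i * JmI J i j))) in Hl by (intros; ring). rewrite vsum_scal in Hl.
      unfold mulvm. cut (0 < -1 * vsum n (fun i => l i * JmI J i j)). lra.
      apply Hl.
Qed.

Definition conv (near : R -> R -> Prop) (f : R -> R) (L : R) :=
  forall eps, 0 < eps -> exists d, 0 < d /\ forall s, near d s -> Rabs (f s - L) < eps.
Definition good_near (near : R -> R -> Prop) :=
  (forall d1 d2 s, 0 < d1 <= d2 -> near d1 s -> near d2 s) /\ (forall d, 0 < d -> exists s, near d s).

Section Conv.
Variable near : R -> R -> Prop.
Hypothesis Hn : good_near near.

Lemma conv_const a : conv near (fun _ => a) a.
Proof. intros eps He. exists 1. split; [lra|]. intros. rewrite Rminus_diag, Rabs_R0; auto. Qed.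

Lemma conv_plus f g L M : conv near f L -> conv near g M -> conv near (fun s => f s + g s) (L + M).
Proof. intros Hf Hg eps He. destruct (Hf (eps/2)) as [d1 [Hd1 H1]]; [lra|].
  destruct (Hg (eps/2)) as [d2 [Hd2 H2]]; [lra|]. exists (Rmin d1 d2). split. apply Rmin_case; lra.
  intros s Hs. destruct Hn as [Hm _].
  assert (near d1 s) by (apply (Hm (Rmin d1 d2)); auto; split; [apply Rmin_case; lra| apply Rmin_l]).
  assert (near d2 s) by (apply (Hm (Rmin d1 d2)); auto; split; [apply Rmin_case; lra| apply Rmin_r]).
  specialize (H1 s H). specialize (H2 s H0).
  replace (f s + g s - (L + M)) with ((f s - L) + (g s - M)) by ring.
  eapply Rle_lt_trans; [apply Rabs_triang|]. lra. Qed.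

Lemma conv_mult f g L M : conv near f L -> conv near g M -> conv near (fun s => f s * g s) (L * M).
Proof. intros Hf Hg eps He. set (eta := Rmin 1 (eps / (2 * (1 + Rabs L + Rabs M)))).
  pose proof (Rabs_pos L) as HaL. pose proof (Rabs_pos M) as HaM.
  assert (Heta : 0 < eta). { unfold eta. apply Rmin_case. lra. apply Rdiv_lt_0_compat; lra. }
  assert (Heta1 : eta <= 1) by apply Rmin_l.
  assert (Heta2 : eta * (1 + Rabs L + Rabs M) <= eps / 2).
  { assert (eta <= eps / (2 * (1 + Rabs L + Rabs M))) by apply Rmin_r.
    replace (eps/2) with (eps / (2 * (1 + Rabs L + Rabs M)) * (1 + Rabs L + Rabs M)) by (field; lra).
    apply Rmult_le_compat_r; lra. }
  destruct (Hf eta Heta) as [d1 [Hd1 H1]]. destruct (Hg eta Heta) as [d2 [Hd2 H2]].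
  exists (Rmin d1 d2). split. apply Rmin_case; lra.
  intros s Hs. destruct Hn as [Hm _].
  assert (near d1 s) by (apply (Hm (Rmin d1 d2)); auto; split; [apply Rmin_case; lra| apply Rmin_l]).
  assert (near d2 s) by (apply (Hm (Rmin d1 d2)); auto; split; [apply Rmin_case; lra| apply Rmin_r]).
  specialize (H1 s H). specialize (H2 s H0).
  replace (f s * g s - L * M) with ((f s - L) * (g s - M) + L * (g s - M) + M * (f s - L)) by ring.
  eapply Rle_lt_trans; [apply Rabs_triang|].
  eapply Rle_lt_trans; [apply Rplus_le_compat_r, Rabs_triang|].
  rewrite !Rabs_mult. pose proof (Rabs_pos (f s - L)). pose proof (Rabs_pos (g s - M)).
  assert (Rabs (f s - L) * Rabs (g s - M) <= eta * eta) by (apply Rmult_le_compat; lra).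
  assert (Rabs L * Rabs (g s - M) <= Rabs L * eta) by (apply Rmult_le_compat_l; lra).
  assert (Rabs M * Rabs (f s - L) <= Rabs M * eta) by (apply Rmult_le_compat_l; lra).
  assert (eta * eta <= eta) by nra. nra. Qed.

Lemma conv_abs f L : conv near f L -> conv near (fun s => Rabs (f s)) (Rabs L).
Proof. intros Hf eps He. destruct (Hf eps He) as [d [Hd H]]. exists d; split; auto.
  intros s Hs. eapply Rle_lt_trans; [apply Rabs_triang_inv2|]. auto. Qed.

Lemma conv_vsum m (F : R -> nat -> R) (Lv : nat -> R) :
  (forall i, (i < m)%nat -> conv near (fun s => F s i) (Lv i)) ->
  conv near (fun s => vsum m (F s)) (vsum m Lv).
Proof. induction m; intros H; simpl. apply conv_const.
  apply conv_plus. apply IHm; intros; apply H; lia. apply H; lia. Qed.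

Lemma conv_le f L B : conv near f L -> (exists d0, 0 < d0 /\ forall s, near d0 s -> f s <= B) -> L <= B.
Proof. intros Hf [d0 [Hd0 H]]. destruct (Rle_dec L B) as [|Hc]; auto. exfalso.
  destruct (Hf (L - B)) as [d [Hd H1]]; [lra|]. destruct Hn as [Hm He].
  destruct (He (Rmin d d0)) as [s Hs]. apply Rmin_case; lra.
  assert (near d s) by (apply (Hm (Rmin d d0)); auto; split; [apply Rmin_case; lra| apply Rmin_l]).
  assert (near d0 s) by (apply (Hm (Rmin d d0)); auto; split; [apply Rmin_case; lra| apply Rmin_r]).
  specialize (H1 s H0). specialize (H s H2). apply Rabs_def2 in H1. lra. Qed.

Lemma conv_ge f L B : conv near f L -> (exists d0, 0 < d0 /\ forall s, near d0 s -> B <= f s) -> B <= L.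
Proof. intros Hf [d0 [Hd0 H]]. destruct (Rle_dec B L) as [|Hc]; auto. exfalso.
  destruct (Hf (B - L)) as [d [Hd H1]]; [lra|]. destruct Hn as [Hm He].
  destruct (He (Rmin d d0)) as [s Hs]. apply Rmin_case; lra.
  assert (near d s) by (apply (Hm (Rmin d d0)); auto; split; [apply Rmin_case; lra| apply Rmin_l]).
  assert (near d0 s) by (apply (Hm (Rmin d d0)); auto; split; [apply Rmin_case; lra| apply Rmin_r]).
  specialize (H1 s H0). specialize (H s H2). apply Rabs_def2 in H1. lra. Qed.

Lemma conv_exp c p : (forall d s, near d s -> Rabs (s - p) < d) ->
  conv near (fun s => exp (c * s)) (exp (c * p)).
Proof. intros Hnp eps He.
  assert (Hd : derivable_pt_lim (fun s => exp (c * s)) p (exp (c * p) * (0 * p + c * 1))).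
  { apply (derivable_pt_lim_comp (fun s => c * s) exp).
    apply (derivable_pt_lim_mult (fun _ => c) (fun s => s)). apply derivable_pt_lim_const. apply derivable_pt_lim_id.
    apply derivable_pt_lim_exp. }
  pose proof (derivable_continuous_pt _ _ (exist _ _ Hd)) as Hc.
  destruct (Hc eps He) as [d [Hd0 H]]. exists d. split; auto. intros s Hs.
  destruct (Req_dec s p) as [->|Hne]. rewrite Rminus_diag, Rabs_R0; auto.
  apply (H s). split. split; [exact I| auto]. simpl. unfold R_dist. apply Hnp; auto. Qed.
End Conv.

Definition near_r (p : R) : R -> R -> Prop := fun d s => p < s < p + d.
Definition near_l (p : R) : R -> R -> Prop := fun d s => p - d < s < p.

Lemma good_r p : good_near (near_r p).
Proof. split; unfold near_r; intros. lra. exists (p + d/2); lra. Qed.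
Lemma good_l p : good_near (near_l p).
Proof. split; unfold near_l; intros. lra. exists (p - d/2); lra. Qed.
Lemma dist_r p d s : near_r p d s -> Rabs (s - p) < d.
Proof. unfold near_r; intros. rewrite Rabs_right; lra. Qed.
Lemma dist_l p d s : near_l p d s -> Rabs (s - p) < d.
Proof. unfold near_l; intros. rewrite Rabs_left; lra. Qed.

Lemma dmult f g x a b : derivable_pt_lim f x a -> derivable_pt_lim g x b ->
  derivable_pt_lim (fun y => f y * g y) x (a * g x + f x * b).
Proof. intros. apply (derivable_pt_lim_mult f g); auto. Qed.
Lemma dplus f g x a b : derivable_pt_lim f x a -> derivable_pt_lim g x b ->
  derivable_pt_lim (fun y => f y + g y) x (a + b).
Proof. intros. apply (derivable_pt_lim_plus f g); auto. Qed.
Lemma dext f x a b : derivable_pt_lim f x a -> a = b -> derivable_pt_lim f x b.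
Proof. intros H ->; auto. Qed.

Lemma dvsum m (F : R -> nat -> R) (D : nat -> R) p :
  (forall i, (i < m)%nat -> derivable_pt_lim (fun u => F u i) p (D i)) ->
  derivable_pt_lim (fun u => vsum m (F u)) p (vsum m D).
Proof. induction m; intros H; simpl. apply derivable_pt_lim_const.
  apply dplus. apply IHm; intros; apply H; lia. apply H; lia. Qed.

Lemma eps_lemma u v M : 0 <= M -> (forall d, 0 < d -> u <= v + d * M) -> u <= v.
Proof. intros HM H. destruct (Rle_dec u v) as [|Hc]; auto. exfalso.
  specialize (H ((u - v) / (2 * (M + 1)))). 
  assert (0 < (u - v) / (2 * (M + 1))) by (apply Rdiv_lt_0_compat; lra).
  specialize (H H0). assert ((u - v) / (2 * (M + 1)) * M < u - v).
  { replace (u - v) with (((u-v)/(2*(M+1))) * (2 * (M+1))) at 2 by (field; lra). nra. }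
  lra. Qed.

Lemma diag_bound a x r d : 0 < d -> 0 < r -> r * r = x * x + d * d ->
  a * (x * (x / r)) <= a * r + Rabs a * d.
Proof. intros Hd Hr Hrr. set (q := x * (x / r)).
  assert (Hq : q * r = x * x) by (unfold q; field; lra).
  assert (Hrd : d <= r) by nra.
  assert (q <= r) by nra. assert (r - d <= q) by nra.
  destruct (Rle_dec 0 a). rewrite Rabs_right by lra. nra. rewrite Rabs_left by lra. nra. Qed.

Lemma off_bound a x y r s : 0 <= a -> Rabs x <= s -> Rabs y <= r -> 0 < s -> a * (y * (x / s)) <= a * r.
Proof. intros Ha Hx Hy Hs. apply Rmult_le_compat_l; auto.
  assert (Rabs (x / s) <= 1). { unfold Rdiv. rewrite Rabs_mult, Rabs_inv, (Rabs_right s) by lra.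
    apply (Rmult_le_reg_r s); auto. rewrite Rmult_assoc, Rinv_l by lra. pose proof (Rabs_pos x). lra. }
  eapply Rle_trans; [apply Rle_abs|]. rewrite Rabs_mult. pose proof (Rabs_pos y). pose proof (Rabs_pos (x/s)).
  nra. Qed.

Lemma sqrt_facts x d : 0 < d -> let r := sqrt (x * x + d * d) in
  0 < r /\ r * r = x * x + d * d /\ Rabs x <= r /\ r <= Rabs x + d.
Proof. intros Hd r. assert (Hp : 0 < x * x + d * d) by nra.
  assert (Hr : 0 < r) by (apply sqrt_lt_R0; auto).
  assert (Hrr : r * r = x * x + d * d) by (apply sqrt_sqrt; lra).
  assert (Hax : Rabs x * Rabs x = x * x) by (rewrite <- Rabs_mult; apply Rabs_right; nra).
  pose proof (Rabs_pos x). repeat split; auto; nra. Qed.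

Lemma Rdiv_le_0_compat a b : 0 <= a -> 0 < b -> 0 <= a / b.
Proof. intros. unfold Rdiv. apply Rmult_le_pos; [lra| left; apply Rinv_0_lt_compat; lra]. Qed.

Definition Vf (n : nat) (l : vec) (v : vec) : R := vsum n (fun i => l i * Rabs (v i)).

Section Flow.
Variables (n : nat) (A : mat) (l : vec) (c : R) (x : R -> vec) (a0 b0 : R).
Hypothesis HA : metzler n A.
Hypothesis Hl : forall i, (i < n)%nat -> 0 < l i.
Hypothesis Hc : 0 < c.
Hypothesis HlA : forall j, (j < n)%nat -> mulvm n l A j <= - c * l j.
Hypothesis Hd : forall s i, (i < n)%nat -> a0 < s < b0 ->
  derivable_pt_lim (fun r => x r i) s (mulmv n A (x s) i).

Definition C1 := vsum n (fun i => l i * Rabs (A i i)).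
Definition rr (d : R) (u : R) (i : nat) := sqrt (x u i * x u i + d * d).
Definition Vd (d u : R) := vsum n (fun i => l i * rr d u i).
Definition DV (d u : R) := vsum n (fun i => l i * (x u i * mulmv n A (x u) i / rr d u i)).

Lemma C1_nonneg : 0 <= C1.
Proof. apply vsum_nonneg; intros. pose proof (Hl i H). pose proof (Rabs_pos (A i i)). nra. Qed.

Lemma dVd d u : 0 < d -> a0 < u < b0 -> derivable_pt_lim (Vd d) u (DV d u).
Proof. intros Hdd Hu. unfold Vd, DV. apply dvsum. intros i Hi.
  pose proof (sqrt_facts (x u i) d Hdd) as [Hr _].
  eapply dext.
  - apply (dmult (fun _ => l i) (fun u => rr d u i)). apply derivable_pt_lim_const.
    unfold rr. apply (derivable_pt_lim_comp (fun u => x u i * x u i + d * d) sqrt).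
    + apply dplus. apply dmult; apply Hd; auto. apply dmult; apply derivable_pt_lim_const.
    + apply derivable_pt_lim_sqrt. nra.
  - unfold rr. cbv beta. field. lra.
Qed.

Lemma DV_bound d u : 0 < d -> DV d u <= - c * Vd d u + C1 * d.
Proof. intros Hdd. unfold DV, Vd, C1.
  assert (Hterm : forall i, (i < n)%nat ->
    x u i * mulmv n A (x u) i / rr d u i <= vsum n (fun j => A i j * rr d u j) + Rabs (A i i) * d).
  { intros i Hi. unfold mulmv.
    assert (Eq : x u i * vsum n (fun j => A i j * x u j) / rr d u i =
      vsum n (fun j => A i j * (x u j * (x u i / rr d u i)))).
    { rewrite (vsum_ext n (fun j => A i j * (x u j * (x u i / rr d u i))) (fun j => (x u i / rr d u i) * (A i j * x u j))) by (intros; ring).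
      rewrite vsum_scal. unfold Rdiv. ring. }
    rewrite Eq.
    rewrite <- (vsum_delta n i (Rabs (A i i) * d)) by auto. rewrite <- vsum_plus.
    apply vsum_le. intros j Hj. destruct (Nat.eqb j i) eqn:E.
    - apply Nat.eqb_eq in E; subst j.
      pose proof (sqrt_facts (x u i) d Hdd) as [Hr [Hrr _]].
      unfold rr. apply diag_bound; auto.
    - apply Nat.eqb_neq in E. rewrite Rplus_0_r.
      pose proof (sqrt_facts (x u i) d Hdd) as [Hr [_ [Hx _]]].
      pose proof (sqrt_facts (x u j) d Hdd) as [_ [_ [Hy _]]].
      unfold rr. apply off_bound; auto. }
  eapply Rle_trans.
  { apply vsum_le. intros i Hi. apply Rmult_le_compat_l. pose proof (Hl i Hi); lra. apply Hterm; auto. }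
  rewrite (vsum_ext n _ (fun i => l i * vsum n (fun j => A i j * rr d u j) + d * (l i * Rabs (A i i))))
    by (intros; ring).
  rewrite vsum_plus, vsum_scal.
  rewrite (vsum_ext n (fun i => l i * vsum n _) (fun i => vsum n (fun j => l i * A i j * rr d u j)))
    by (intros; rewrite <- vsum_scal; apply vsum_ext; intros; ring).
  rewrite vsum_swap.
  rewrite (vsum_ext n (fun j => vsum n (fun i => l i * A i j * rr d u j)) (fun j => mulvm n l A j * rr d u j))
    by (intros; unfold mulvm; rewrite Rmult_comm, <- vsum_scal; apply vsum_ext; intros; ring).
  assert (vsum n (fun j => mulvm n l A j * rr d u j) <= - c * vsum n (fun i => l i * rr d u i)).
  { rewrite <- vsum_scal. apply vsum_le. intros j Hj. pose proof (sqrt_facts (x u j) d Hdd) as [Hr _].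
    unfold rr in *. specialize (HlA j Hj). nra. }
  lra.
Qed.

Lemma flow_mono a s : a0 < a -> a <= s -> s < b0 ->
  exp (c * s) * Vf n l (x s) <= exp (c * a) * Vf n l (x a).
Proof. intros Ha Has Hs. destruct (Req_dec a s) as [->|Hne]; [lra|].
  set (S := vsum n (fun i => l i)).
  assert (HS : 0 <= S) by (apply vsum_nonneg; intros; pose proof (Hl i H); lra).
  assert (Hes : 0 < exp (c * s)) by apply exp_pos. assert (Hea : 0 < exp (c * a)) by apply exp_pos.
  apply (eps_lemma _ _ (exp (c * s) * (C1 / c) + exp (c * a) * S)).
  { pose proof C1_nonneg. assert (0 <= C1 / c) by (apply Rdiv_le_0_compat; lra). nra. }
  intros d Hdd.
  set (H := fun u => exp (c * u) * (Vd d u - C1 / c * d)).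
  assert (HH : H s <= H a).
  { destruct (MVT_cor2 H (fun u => c * exp (c * u) * (Vd d u - C1 / c * d) + exp (c * u) * DV d u) a s)
      as [xi [Hxi1 Hxi2]]; [lra| |].
    - intros u Hu. unfold H. eapply dext.
      + apply dmult. 
        * apply (derivable_pt_lim_comp (fun s => c * s) exp).
          apply (dmult (fun _ => c) (fun s => s)). apply derivable_pt_lim_const. apply derivable_pt_lim_id.
          apply derivable_pt_lim_exp.
        * apply dplus. apply dVd; auto; lra. apply derivable_pt_lim_const.
      + simpl. ring.
    - assert (DV d xi <= - c * Vd d xi + C1 * d) by (apply DV_bound; auto).
      assert (Hex : 0 < exp (c * xi)) by apply exp_pos.
      assert (c * exp (c * xi) * (Vd d xi - C1 / c * d) + exp (c * xi) * DV d xi <= 0).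
      { replace (c * exp (c * xi) * (Vd d xi - C1 / c * d)) with (exp (c * xi) * (c * Vd d xi - C1 * d))
          by (field; lra). nra. }
      nra. }
  assert (Hv1 : Vf n l (x s) <= Vd d s).
  { apply vsum_le; intros i Hi. pose proof (sqrt_facts (x s i) d Hdd) as [_ [_ [? _]]].
    apply Rmult_le_compat_l. pose proof (Hl i Hi); lra. auto. }
  assert (Hv2 : Vd d a <= Vf n l (x a) + d * S).
  { unfold S. rewrite <- vsum_scal. unfold Vf. rewrite <- vsum_plus. apply vsum_le; intros i Hi.
    pose proof (sqrt_facts (x a i) d Hdd) as [_ [_ [_ ?]]]. pose proof (Hl i Hi). unfold rr. nra. }
  unfold H in HH. pose proof C1_nonneg. assert (0 <= C1 / c) by (apply Rdiv_le_0_compat; lra).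
  assert (exp (c * s) * Vf n l (x s) <= exp (c * s) * Vd d s) by (apply Rmult_le_compat_l; lra).
  assert (exp (c * a) * Vd d a <= exp (c * a) * (Vf n l (x a) + d * S)) by (apply Rmult_le_compat_l; lra).
  assert (0 <= exp (c * a) * (C1 / c * d)) by (apply Rmult_le_pos; [lra| apply Rmult_le_pos; lra]).
  assert (HH' : exp (c * s) * Vd d s - exp (c * s) * (C1 / c * d) <= exp (c * a) * Vd d a - exp (c * a) * (C1 / c * d)).
  { rewrite <- !Rmult_minus_distr_l. exact HH. }
  lra.
Qed.
End Flow.

Lemma fin_min N (g : nat -> R) : (forall j, (j < N)%nat -> 0 < g j) -> exists m, 0 < m /\ forall j, (j < N)%nat -> m <= g j.
Proof. induction N; intros H. exists 1; split; [lra| intros; lia].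
  destruct IHN as [m [Hm H1]]. intros; apply H; lia.
  exists (Rmin m (g N)). assert (0 < g N) by (apply H; lia). split. apply Rmin_case; auto.
  intros j Hj. destruct (Nat.eq_dec j N). subst. apply Rmin_r.
  eapply Rle_trans. apply Rmin_l. apply H1; lia. Qed.

Lemma locate t : impulse_seq t -> forall s, t 0%nat <= s -> exists k, t k <= s < t (S k).
Proof. intros [Hinc Hunb] s Hs. destruct (Hunb s) as [K HK].
  revert HK. induction K; intros HK. lra.
  destruct (Rle_dec (t K) s). exists K; lra. apply IHK; lra. Qed.

Lemma exp_gt y : y < exp y.
Proof. destruct (Req_dec y 0) as [->|H]. rewrite exp_0; lra. pose proof (exp_ineq1 y H); lra. Qed.

Lemma jump_V n J l v : nonneg_mat n J -> (forall i, (i < n)%nat -> 0 < l i) ->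
  (forall j, (j < n)%nat -> mulvm n l (JmI J) j < 0) ->
  Vf n l (mulmv n J v) <= Vf n l v.
Proof. intros HJ Hl HlJ. unfold Vf.
  eapply Rle_trans.
  { apply vsum_le. intros i Hi. apply Rmult_le_compat_l. pose proof (Hl i Hi); lra.
    unfold mulmv. eapply Rle_trans. apply vsum_abs.
    apply Req_le. apply (vsum_ext n _ (fun j => J i j * Rabs (v j))). intros j Hj.
    rewrite Rabs_mult, (Rabs_right (J i j)); auto. apply Rle_ge, HJ; auto. }
  change (vsum n (fun i => l i * vsum n (fun j => J i j * Rabs (v j))) <= vsum n (fun i => l i * Rabs (v i))).
  change (vsum n (fun i => l i * mulmv n J (fun j => Rabs (v j)) i) <= vsum n (fun i => l i * Rabs (v i))).
  rewrite dual.
  apply vsum_le. intros j Hj. apply Rmult_le_compat_r. apply Rabs_pos.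
  specialize (HlJ j Hj). unfold mulvm, JmI in *.
  rewrite (vsum_ext n (fun i => l i * (J i j - idm i j)) (fun i => l i * J i j + (-1) * (l i * idm i j))) in HlJ
    by (intros; ring).
  rewrite vsum_plus, vsum_scal, vsum_idm in HlJ by auto. lra. Qed.

Section Main.
Variables (n : nat) (A J : mat) (l : vec) (c : R).
Hypothesis HA : metzler n A.
Hypothesis HJ : nonneg_mat n J.
Hypothesis Hl : forall i, (i < n)%nat -> 0 < l i.
Hypothesis Hc : 0 < c.
Hypothesis HlA : forall j, (j < n)%nat -> mulvm n l A j <= - c * l j.
Hypothesis HlJ : forall j, (j < n)%nat -> mulvm n l (JmI J) j < 0.
Variables (t : nat -> R) (x0 : vec) (x : R -> vec).
Hypothesis Ht : impulse_seq t.
Hypothesis Hx : is_solution n A J t x0 x.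

Definition G s := exp (c * s) * Vf n l (x s).

Lemma conv_G near v p : good_near near -> (forall d s, near d s -> Rabs (s - p) < d) ->
  (forall i, (i < n)%nat -> conv near (fun s => x s i) (v i)) ->
  conv near G (exp (c * p) * Vf n l v).
Proof. intros Hn Hd Hc'. unfold G. apply conv_mult; auto. apply conv_exp; auto.
  unfold Vf. apply (conv_vsum near Hn n (fun s i => l i * Rabs (x s i))). intros i Hi.
  apply conv_mult; auto. apply conv_const; auto. apply conv_abs; auto. Qed.

Lemma interval k s : t k < s <= t (S k) -> G s <= exp (c * t k) * Vf n l (mulmv n J (x (t k))).
Proof. destruct Hx as [H0 [Hder [Hleft Hright]]].
  assert (Hflow : forall a s, t k < a -> a <= s -> s < t (S k) -> G s <= G a).
  { intros a s' Ha Has Hs. unfold G. apply (flow_mono n A l c x (t k) (t (S k))); auto. intros; eapply Hder; eauto. }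
  assert (Hopen : forall s, t k < s < t (S k) -> G s <= exp (c * t k) * Vf n l (mulmv n J (x (t k)))).
  { intros s' Hs'. apply (conv_ge (near_r (t k)) (good_r _) G). apply conv_G. apply good_r. apply dist_r.
    intros i Hi eps He. destruct (Hright k i Hi eps He) as [d [Hd Hd2]]. exists d; split; [exact Hd|]. intros u Hu. apply Hd2. exact Hu.
    exists (s' - t k). split. lra. intros u Hu. unfold near_r in Hu. apply Hflow; lra. }
  intros Hs. destruct (Req_dec s (t (S k))) as [->|Hne].
  - apply (conv_le (near_l (t (S k))) (good_l _) G). apply conv_G. apply good_l. apply dist_l.
    intros i Hi eps He. destruct (Hleft k i Hi eps He) as [d [Hd Hd2]]. exists d; split; [exact Hd|]. intros u Hu. apply Hd2. exact Hu.
    exists (t (S k) - t k). split. destruct Ht as [Hinc _]. specialize (Hinc k). lra.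
    intros u Hu. unfold near_l in Hu. apply Hopen; lra.
  - apply Hopen; lra.
Qed.

Lemma chain k : G (t k) <= G (t 0%nat).
Proof. induction k. lra. destruct Ht as [Hinc _].
  eapply Rle_trans. apply (interval k). specialize (Hinc k); lra.
  eapply Rle_trans; [|exact IHk]. unfold G. apply Rmult_le_compat_l. left; apply exp_pos.
  apply jump_V; auto. Qed.

Lemma G_bound s : t 0%nat <= s -> G s <= exp (c * t 0%nat) * Vf n l x0.
Proof. intros Hs. replace (exp (c * t 0%nat) * Vf n l x0) with (G (t 0%nat)).
  2: { unfold G, Vf. f_equal. apply vsum_ext. intros i Hi. destruct Hx as [H0 _]. rewrite H0; auto. }
  destruct (locate t Ht s Hs) as [k Hk]. destruct (Req_dec s (t k)) as [->|Hne]. apply chain.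
  eapply Rle_trans. apply (interval k). lra.
  eapply Rle_trans; [|apply (chain k)]. unfold G. apply Rmult_le_compat_l. left; apply exp_pos.
  apply jump_V; auto. Qed.

Lemma comp_bound s i : t 0%nat <= s -> (i < n)%nat ->
  l i * Rabs (x s i) * exp (c * s) <= exp (c * t 0%nat) * Vf n l x0.
Proof. intros Hs Hi. eapply Rle_trans; [|apply G_bound; auto]. unfold G.
  rewrite Rmult_comm. apply Rmult_le_compat_l. left; apply exp_pos.
  unfold Vf. apply (vsum_term n (fun i => l i * Rabs (x s i)) i Hi).
  intros j Hj. pose proof (Hl j Hj). pose proof (Rabs_pos (x s j)). nra. auto. Qed.
End Main.

Lemma a_to_AS n A J : metzler n A -> nonneg_mat n J -> cond_a n A J -> AS_arbitrary_dwell n A J.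
Proof. intros HA HJ [l [Hl [HlA HlJ]]].
  destruct (fin_min n (fun j => - mulvm n l A j / l j)) as [c [Hc Hc2]].
  { intros j Hj. specialize (HlA j Hj). specialize (Hl j Hj). unfold Rdiv.
    apply Rmult_lt_0_compat. lra. apply Rinv_0_lt_compat; lra. }
  assert (HlA' : forall j, (j < n)%nat -> mulvm n l A j <= - c * l j).
  { intros j Hj. specialize (Hc2 j Hj). specialize (Hl j Hj).
    assert (c * l j <= - mulvm n l A j).
    { replace (- mulvm n l A j) with ((- mulvm n l A j / l j) * l j) by (field; lra).
      apply Rmult_le_compat_r; lra. } lra. }
  destruct (fin_min n l Hl) as [lm [Hlm Hlm2]].
  set (S := vsum n l). assert (HS : 0 <= S) by (apply vsum_nonneg; intros; left; auto).
  intros t Ht. split.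
  - intros eps He. set (delta := eps * lm / (2 * (S + 1))).
    assert (Hdel : 0 < delta) by (unfold delta; apply Rdiv_lt_0_compat; [apply Rmult_lt_0_compat|]; lra).
    exists delta. split; auto. intros x0 x Hx0 Hx s Hs i Hi.
    pose proof (comp_bound n A J l c HA HJ Hl Hc HlA' HlJ t x0 x Ht Hx s i Hs Hi) as HB.
    assert (HV : Vf n l x0 <= delta * S).
    { unfold Vf, S. rewrite <- vsum_scal. apply vsum_le. intros j Hj.
      specialize (Hx0 j Hj). specialize (Hl j Hj). nra. }
    assert (He0 : exp (c * t 0%nat) <= exp (c * s)).
    { destruct (Req_dec s (t 0%nat)) as [->|]. lra. left. apply exp_increasing. nra. }
    assert (Hes : 0 < exp (c * s)) by apply exp_pos.
    assert (HV0 : 0 <= Vf n l x0) by (apply vsum_nonneg; intros j Hj; pose proof (Hl j Hj); pose proof (Rabs_pos (x0 j)); nra).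
    assert (H1 : l i * Rabs (x s i) <= delta * S).
    { apply (Rmult_le_reg_r (exp (c * s))); auto.
      assert (exp (c * t 0%nat) * Vf n l x0 <= exp (c * s) * (delta * S)).
      { apply Rmult_le_compat; auto; left; apply exp_pos. }
      lra. }
    assert (H2 : lm * Rabs (x s i) <= delta * S).
    { eapply Rle_trans; [|exact H1]. apply Rmult_le_compat_r. apply Rabs_pos. auto. }
    assert (H3 : delta * S < eps * lm).
    { unfold delta. replace (eps * lm / (2 * (S + 1)) * S) with ((eps * lm) * (S / (2 * (S + 1)))) by (field; lra).
      assert (S / (2 * (S + 1)) < 1). { apply (Rmult_lt_reg_r (2 * (S + 1))). lra.
        replace (S / (2 * (S + 1)) * (2 * (S + 1))) with S by (field; lra). lra. }
      assert (0 < eps * lm) by nra. nra. }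
    nra.
  - intros x0 x Hx i Hi eps He.
    set (K0 := exp (c * t 0%nat) * Vf n l x0).
    exists (Rmax (t 0%nat) (K0 / (l i * eps * c))). intros s Hs.
    assert (Hs0 : t 0%nat <= s) by (eapply Rle_trans; [apply Rmax_l| exact Hs]).
    assert (Hs1 : K0 / (l i * eps * c) <= s) by (eapply Rle_trans; [apply Rmax_r| exact Hs]).
    pose proof (comp_bound n A J l c HA HJ Hl Hc HlA' HlJ t x0 x Ht Hx s i Hs0 Hi) as HB. fold K0 in HB.
    specialize (Hl i Hi).
    assert (Hlec : 0 < l i * eps * c) by (apply Rmult_lt_0_compat; [apply Rmult_lt_0_compat|]; lra).
    assert (HK : K0 <= l i * eps * c * s).
    { replace K0 with ((K0 / (l i * eps * c)) * (l i * eps * c)) by (field; lra).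
      rewrite (Rmult_comm (l i * eps * c) s). apply Rmult_le_compat_r; lra. }
    pose proof (exp_gt (c * s)) as Hex.
    assert (K0 < l i * eps * exp (c * s)).
    { assert (l i * eps * (c * s) < l i * eps * exp (c * s)) by (apply Rmult_lt_compat_l; nra). nra. }
    assert (Hes : 0 < exp (c * s)) by apply exp_pos.
    assert (l i * exp (c * s) * Rabs (x s i) < l i * exp (c * s) * eps) by nra.
    apply Rmult_lt_reg_l in H0; auto. apply Rmult_lt_0_compat; lra.
Qed.

Theorem theorem1 (n : nat) (A J : mat)
  (HA : metzler n A) (HJ : nonneg_mat n J) :
  (cond_a n A J <-> cond_b n A J) /\
  ((cond_a n A J \/ cond_b n A J) -> AS_arbitrary_dwell n A J).
Proof. split. split; [apply a_to_b| apply b_to_a].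
  intros [H|H]. apply a_to_AS; auto. apply a_to_AS; auto. apply b_to_a; auto. Qed.
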